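(* Let $A,B$ be hypermatrices of order $n$ with $\Xi(A),\Xi(B)\in\mathcal C_n$. Then $A\preceq_B B$ if and only if $\Delta(A)_{i,j,k}\le\Delta(B)_{i,j,k}$ for all $i,k\in[n]$ and $j\in[ik]$.
   Context: Let $[n]=\{1,\dots,n\}$, $[0,n]=\{0,\dots,n\}$. A hypermatrix of order $n$ is an integer array $A=(A_{i,j,k})_{i,j,k\in[n]}$; $\Xi(A)_{i,j,k}=\sum_{a\le i,b\le j,c\le k}A_{a,b,c}$ for $i,j,k\in[0,n]$. A corner-sum hypermatrix of order $n$ is an integer array $C$ indexed by $[0,n]^3$ such that for all $i,j\in[0,n]$: $C_{i,j,0}=C_{i,0,j}=C_{0,i,j}=0$, $C_{i,j,n}=C_{i,n,j}=C_{n,i,j}=ij$, and for all $k\in[n]$ each of $C_{i,j,k}-C_{i,j,k-1}$, $C_{i,k,j}-C_{i,k-1,j}$, $C_{k,i,j}-C_{k-1,i,j}$ is an integer in $\{\max(0,i+j-n),\dots,\min(i,j)\}$; $\mathcal C_n$ is the set of these. The Bruhat order on such hypermatrices: $A\preceq_B B$ iff $\Xi(A)\ge\Xi(B)$ entrywise (equivalently, $A-B$ is a sum of positive T-blocks). The partial-sum hypermatrix is $P(A)_{i,j,k}=\sum_{a=1}^i\sum_{b=1}^k A_{a,j,b}$ (non-negative whenever $\Xi(A)\in\mathcal C_n$). $\Delta(A)$ is the family of sequences $\Delta(A)_{i,*,k}$, $i,k\in[n]$, in which each $j\in[n]$ occurs exactly $P(A)_{i,j,k}$ times, listed in weakly increasing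 order; this sequence has length $ik$, and $\Delta(A)_{i,j,k}$ denotes its $j$-th entry. *)

(* Defs.v *)
From mathcomp Require Import all_boot all_order all_algebra.
Set Implicit Arguments. Unset Strict Implicit. Unset Printing Implicit Defensive.
Import Order.TTheory GRing.Theory Num.Theory.
Local Open Scope ring_scope.

(* A hypermatrix of order n: integer array; only the entries with indices in
   [n] = {1,...,n} are meaningful (the others are never used). *)
Definition hypermatrix := nat -> nat -> nat -> int.

Definition Xi (A : hypermatrix) : hypermatrix := fun i j k =>
  \sum_(1 <= a < i.+1) \sum_(1 <= b < j.+1) \sum_(1 <= c < k.+1) A a b c.

Definition corner_sum (n : nat) (C : hypermatrix) : Prop :=
  (forall i j, (i <= n)%N -> (j <= n)%N ->
     [/\ C i j 0%N = 0, C i 0%N j = 0 & C 0%N i j = 0] /\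
     [/\ C i j n = (i * j)%:Z, C i n j = (i * j)%:Z & C n i j = (i * j)%:Z]) /\
  (forall i j k, (i <= n)%N -> (j <= n)%N -> (1 <= k <= n)%N ->
     let lo := (maxn 0 (i + j - n))%:Z in
     let hi := (minn i j)%:Z in
     [/\ lo <= C i j k - C i j k.-1 <= hi,
         lo <= C i k j - C i k.-1 j <= hi &
         lo <= C k i j - C k.-1 i j <= hi]).

Definition bruhat_le (n : nat) (A B : hypermatrix) : Prop :=
  forall i j k, (i <= n)%N -> (j <= n)%N -> (k <= n)%N -> Xi B i j k <= Xi A i j k.

Definition Psum (A : hypermatrix) : hypermatrix := fun i j k =>
  \sum_(1 <= a < i.+1) \sum_(1 <= b < k.+1) A a j b.

(* Delta(A)_{i,*,k}: the weakly increasing sequence in which each j in [n]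
   occurs exactly P(A)_{i,j,k} times (P(A) is nonnegative under the standing
   hypothesis, so absz is harmless). *)
Definition Delta_seq (n : nat) (A : hypermatrix) (i k : nat) : seq nat :=
  flatten [seq nseq (absz (Psum A i j k)) j | j <- iota 1 n].

Definition Delta (n : nat) (A : hypermatrix) (i j k : nat) : nat :=
  nth 0%N (Delta_seq n A i k) j.-1.

(* Main.v *)
Require Import Defs.
From mathcomp Require Import all_boot all_order all_algebra.
Import Order.TTheory GRing.Theory Num.Theory.

Definition fl (c : nat -> nat) a len :=
  flatten [seq nseq (c x) x | x <- iota a len].

Lemma fl_count c j len : forall a,
  count (fun x => x <= j) (fl c a len) = \sum_(a <= x < a + len) (x <= j) * c x.
Proof.
elim: len => [|len IH] a; first by rewrite addn0 big_geq.
rewrite /fl /= count_cat count_nseq -/(fl c a.+1 len) IH.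
by rewrite (@big_ltn _ _ _ a) ?addnS ?ltnS ?leq_addr // addSn.
Qed.

Lemma fl_size c len : forall a, size (fl c a len) = \sum_(a <= x < a + len) c x.
Proof.
elim: len => [|len IH] a; first by rewrite addn0 big_geq.
rewrite /fl /= size_cat size_nseq -/(fl c a.+1 len) IH.
by rewrite (@big_ltn _ _ _ a) ?addnS ?ltnS ?leq_addr // addSn.
Qed.

Lemma fl_mem c len : forall a x, x \in fl c a len -> a <= x.
Proof.
elim: len => [|len IH] a x //=.
rewrite /fl /= mem_cat -/(fl c a.+1 len) => /orP[/nseqP[-> _] //|/IH].
exact: ltnW.
Qed.

Lemma fl_nth c len : forall a m j, m < size (fl c a len) ->
  (nth 0 (fl c a len) m <= j) = (m < count (fun x => x <= j) (fl c a len)).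
Proof.
elim: len => [|len IH] a m j //=.
rewrite /fl /= -/(fl c a.+1 len) nth_cat count_cat count_nseq size_cat size_nseq.
have Hz : a > j -> count (fun x => x <= j) (fl c a.+1 len) = 0.
  move=> Haj; apply/eqP; rewrite -leqn0 leqNgt -has_count; apply/hasP => [[x /fl_mem Hx Hxj]].
  by have := leq_trans Haj (ltnW (leq_trans Hx Hxj)); rewrite ltnn.
case: (ltnP m (c a)) => Hm Hs.
  rewrite nth_nseq Hm; case: (leqP a j) => Haj; first by rewrite mul1n ltn_addr.
  by rewrite Hz.
rewrite IH; last by rewrite -(ltn_add2l (c a)) subnKC.
case: (leqP a j) => Haj; first by rewrite mul1n -(ltn_add2l (c a)) subnKC.
by rewrite Hz // mul0n add0n ltn0.
Qed.

Lemma seq_cmp (sA sB : seq nat) N :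
  size sA = N -> size sB = N ->
  (forall m j, m < size sA -> (nth 0 sA m <= j) = (m < count (fun x => x <= j) sA)) ->
  (forall m j, m < size sB -> (nth 0 sB m <= j) = (m < count (fun x => x <= j) sB)) ->
  (forall j, count (fun x => x <= j) sB <= count (fun x => x <= j) sA) <->
  (forall m, m < N -> nth 0 sA m <= nth 0 sB m).
Proof.
move=> HA HB PA PB; split.
  move=> H m Hm; rewrite PA ?HA //.
  apply: leq_trans (H _); rewrite -PB ?HB //.
move=> H j; set c := count _ sB.
case Hc: c => [|c'] //.
have Hc' : c' < N by rewrite -HB -Hc; exact: count_size.
have := H _ Hc'; have : nth 0 sB c' <= j by rewrite PB ?HB // -/c Hc.
move=> h1 h2; have := leq_trans h2 h1; rewrite PA ?HA //.
Qed.

Local Open Scope ring_scope.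

Lemma Xi_Psum A i j k : Xi A i j k = \sum_(1 <= b < j.+1) Psum A i b k.
Proof. by rewrite /Xi /Psum exchange_big. Qed.

Lemma Psum_diff A i b k : (1 <= b)%N -> Psum A i b k = Xi A i b k - Xi A i b.-1 k.
Proof.
case: b => // b _; rewrite !Xi_Psum big_nat_recr //=.
by rewrite addrC addrK.
Qed.

Lemma Psum_ge0 n A i b k : corner_sum n (Xi A) -> (i <= n)%N -> (k <= n)%N ->
  (1 <= b <= n)%N -> 0 <= Psum A i b k.
Proof.
move=> [_ H] Hi Hk Hb; rewrite Psum_diff; last by case/andP: Hb.
have [_ /andP[h1 _] _] := H i k b Hi Hk Hb.
exact: le_trans _ h1.
Qed.

Lemma DeltaE n A i k : Delta_seq n A i k = fl (fun j => absz (Psum A i j k)) 1 n.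
Proof. by []. Qed.

Lemma count_X n A i k j : corner_sum n (Xi A) -> (i <= n)%N -> (k <= n)%N -> (j <= n)%N ->
  (count (fun x => x <= j)%N (Delta_seq n A i k))%:Z = Xi A i j k.
Proof.
move=> HC Hi Hk Hj; rewrite DeltaE fl_count (@big_cat_nat _ _ _ j.+1) //=.
rewrite [X in (_ + X)%N]big_nat_cond [X in (_ + X)%N]big1 ?addn0; last first.
  by move=> x /andP[/andP[Hx _] _]; rewrite leqNgt Hx.
rewrite Xi_Psum (big_morph Posz PoszD (erefl _)).
apply: eq_big_nat => x /andP[Hx1 Hx2]; rewrite ltnS in Hx2; rewrite Hx2 mul1n.
apply: gez0_abs; apply: (Psum_ge0 _ _ _ _ _ HC) => //; rewrite Hx1 /=.
exact: leq_trans Hj.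
Qed.

Lemma count_big n A i k j : (n <= j)%N ->
  count (fun x => x <= j)%N (Delta_seq n A i k) = size (Delta_seq n A i k).
Proof.
move=> Hj; rewrite DeltaE fl_count fl_size; apply: eq_big_nat => x /andP[_ Hx].
have Hxn : (x <= n)%N by rewrite -ltnS -add1n.
by rewrite (leq_trans Hxn Hj) mul1n.
Qed.

Lemma size_D n A i k : corner_sum n (Xi A) -> (i <= n)%N -> (k <= n)%N ->
  size (Delta_seq n A i k) = (i * k)%N.
Proof.
move=> HC Hi Hk; apply/eqP; rewrite -eqz_nat -(count_big n A i k n (leqnn n)) count_X //.
by have [_ [_ -> _]] := HC.1 i k Hi Hk.
Qed.

Theorem mainTheorem20 (n : nat) (A B : hypermatrix) :
  corner_sum n (Xi A) -> corner_sum n (Xi B) ->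
  (bruhat_le n A B <->
   (forall i k j, (1 <= i <= n)%N -> (1 <= k <= n)%N -> (1 <= j <= i * k)%N ->
      (Delta n A i j k <= Delta n B i j k)%N)).
Proof.
move=> HA HB.
have key : forall i k, (i <= n)%N -> (k <= n)%N ->
  ((forall j, count (fun x => x <= j)%N (Delta_seq n B i k) <=
              count (fun x => x <= j)%N (Delta_seq n A i k))%N <->
   (forall m, m < i * k -> nth 0 (Delta_seq n A i k) m <= nth 0 (Delta_seq n B i k) m)%N).
  move=> i k Hi Hk; apply: seq_cmp; try (by rewrite size_D);
  by move=> m j; rewrite DeltaE; apply: fl_nth.
have cnt : forall i k, (i <= n)%N -> (k <= n)%N ->
  ((forall j, (j <= n)%N -> Xi B i j k <= Xi A i j k) <->
   (forall j, count (fun x => x <= j)%N (Delta_seq n B i k) <=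
              count (fun x => x <= j)%N (Delta_seq n A i k))%N).
  move=> i k Hi Hk; split.
    move=> H j; case: (leqP j n) => Hj.
      by rewrite -lez_nat !count_X //; apply: H.
    by rewrite !count_big ?size_D // ltnW.
  by move=> H j Hj; rewrite -(count_X n B i k j) // -(count_X n A i k j) // lez_nat.
split.
  move=> Hbr i k m /andP[Hi1 Hi] /andP[Hk1 Hk] /andP[Hm1 Hm].
  rewrite /Delta; apply: (key i k Hi Hk).1.
    by apply: (cnt i k Hi Hk).1 => j Hj; apply: Hbr.
  by rewrite prednK.
move=> H i j k Hi Hj Hk.
case: i Hi => [|i] Hi.
  by have [[_ _ ->] _] := HB.1 j k Hj Hk; have [[_ _ ->] _] := HA.1 j k Hj Hk.
case: j Hj => [|j] Hj.
  by have [[_ -> _] _] := HB.1 i.+1 k Hi Hk; have [[_ -> _] _] := HA.1 i.+1 k Hi Hk.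
case: k Hk => [|k] Hk.
  by have [[-> _ _] _] := HB.1 i.+1 j.+1 Hi Hj; have [[-> _ _] _] := HA.1 i.+1 j.+1 Hi Hj.
apply: (cnt i.+1 k.+1 Hi Hk).2 => //.
apply/(key i.+1 k.+1 Hi Hk) => m Hm.
have := H i.+1 k.+1 m.+1 Hi Hk Hm.
by rewrite /Delta.
Qed.
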